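(* Let $\psi_0$ be an eigenfunction of $-\frac12\Delta^\otimes$ (on antisymmetric functions) for the eigenvalue $\omega_0$, whose expansion $\psi_0=\sum_{\overline k}C(\overline k)\Lambda_{j=1}^{\overline N}e^{ik_jx_j}$ satisfies condition (adr), and assume $\int_{\overline{\mathbb T}}|\psi_0(\overline x)|^2d\overline x=Z$. Then the electronic charge density of $\psi_0$ is uniform: $\rho^e(x)=-e\sum_{j=1}^{\overline N}\int_{\mathbb T^{\overline N-1}}|\psi_0(\overline x)|^2\big|_{x_j=x}\prod_{l\ne j}dx_l=-eZ$ for all $x\in\mathbb T$. Equivalently, $\int_{\mathbb T^{\overline N-1}}|\psi_0(\overline x)|^2\big|_{x_1=x}dx_2\cdots dx_{\overline N}=Z/\overline N$ for all $x\in\mathbb T$.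
   Context: Fix $N\in\mathbb N$, $e>0$, $Z>0$. $\mathbb T:=\mathbb R^3/N\mathbb Z^3$, $\overline N:=N^3$, $\overline{\mathbb T}:=\mathbb T^{\overline N}$ with points $\overline x=(x_1,\dots,x_{\overline N})$, $\Xi:=\frac{2\pi}N\mathbb Z^3$, $\Delta^\otimes=\sum_j\Delta_{x_j}$. $\omega_0$ is the minimal eigenvalue of $-\frac12\Delta^\otimes$ on antisymmetric functions on $\overline{\mathbb T}$. The exterior product is $[\Lambda_{j=1}^{\overline N}f_j](\overline x)=\frac1{\sqrt{\overline N!}}\sum_{\pi\in S_{\overline N}}(-1)^{|\pi|}\prod_{j}f_j(x_{\pi(j)})$. Every eigenfunction $\psi_0$ for $\omega_0$ has an expansion $\psi_0=\sum_{\overline k}C(\overline k)\Lambda_{j=1}^{\overline N}e^{ik_jx_j}$ over sets $\overline k=\{k_1,\dots,k_{\overline N}\}$ of distinct $k_j\in\Xi$ with $\frac12\sum_jk_j^2=\omega_0$. Condition (adr): for any two distinct sets $\overline k\neq\overline k'$ with $C(\overline k)\neq0\neq C(\overline k')$ one has $\#(\overline k\setminus\overline k')\ge2$. *)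

(* Defs.v *)
From HB Require Import structures.
From mathcomp Require Import all_boot all_fingroup.
From mathcomp Require Import ssralg ssrint.
From Stdlib Require Import Reals.

Unset Printing Implicit Defensive.

Local Open Scope R_scope.

Record Cx := mkC { re : R; im : R }.
Definition C0 : Cx := mkC 0 0.
Definition C1 : Cx := mkC 1 0.
Definition Cadd (z w : Cx) : Cx := mkC (re z + re w) (im z + im w).
Definition Cmul (z w : Cx) : Cx :=
  mkC (re z * re w - im z * im w) (re z * im w + im z * re w).
Definition Cscale (r : R) (z : Cx) : Cx := mkC (r * re z) (r * im z).
Definition Cexpi (theta : R) : Cx := mkC (cos theta) (sin theta).
Definition Cnorm2 (z : Cx) : R := re z * re z + im z * im z.

Definition intR (z : int) : R :=
  match z with Posz n => INR n | Negz n => - INR (S n) end.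

(* A momentum k in Xi = (2 pi / N) Z^3 is represented by its integer
   coordinates m in Z^3, with k = (2 pi / N) m. *)
Definition Mom := (int * int * int)%type.

Definition kdot (N : nat) (m : Mom) (p : R * R * R) : R :=
  let '(m1, m2, m3) := m in let '(p1, p2, p3) := p in
  (2 * PI / INR N) * (intR m1 * p1 + intR m2 * p2 + intR m3 * p3).

Definition knorm2 (N : nat) (m : Mom) : R :=
  let '(m1, m2, m3) := m in
  (2 * PI / INR N) ^ 2 * (intR m1 ^ 2 + intR m2 ^ 2 + intR m3 ^ 2).

Definition Nbar (N : nat) : nat := expn N 3.

Definition energy (N : nat) (ks : 'I_(Nbar N) -> Mom) : R :=
  \big[Rplus/0]_(j < Nbar N) (knorm2 N (ks j) / 2).

(* omega0 is the minimal eigenvalue of -1/2 Delta on antisymmetric functions,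
   i.e. the minimal energy of Nbar pairwise distinct momenta in Xi. *)
Definition is_min_energy (N : nat) (w : R) : Prop :=
  (exists ks : 'I_(Nbar N) -> Mom, injective ks /\ energy N ks = w) /\
  (forall ks : 'I_(Nbar N) -> Mom, injective ks -> w <= energy N ks).

(* A point xbar of Tbar = T^Nbar is given by its real coordinates
   y : nat -> R; particle l sits at (y (3l), y (3l+1), y (3l+2)). *)
Definition pos (y : nat -> R) (l : nat) : R * R * R :=
  (y (muln 3 l), y (addn (muln 3 l) 1), y (addn (muln 3 l) 2)).

Definition sgnR (n : nat) (s : 'S_n) : R := if odd_perm s then -1 else 1.

Definition wedge (N : nat) (ks : 'I_(Nbar N) -> Mom) (y : nat -> R) : Cx :=
  Cscale (/ sqrt (INR (factorial (Nbar N))))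
    (\big[Cadd/C0]_(s : 'S_(Nbar N))
       Cscale (sgnR (Nbar N) s)
         (\big[Cmul/C1]_(j < Nbar N) Cexpi (kdot N (ks j) (pos y (s j))))).

Definition psi (N M : nat) (C : 'I_M -> Cx) (K : 'I_M -> 'I_(Nbar N) -> Mom)
  (y : nat -> R) : Cx :=
  \big[Cadd/C0]_(t < M) Cmul (C t) (wedge N (K t) y).

Definition is_RInt (f : R -> R) (a b v : R) : Prop :=
  exists pr : Riemann_integrable f a b, RiemannInt pr = v.

Definition upd (y : nat -> R) (i : nat) (t : R) : nat -> R :=
  fun n => if Nat.eqb n i then t else y n.

(* iint L vs F y v : the iterated integral of F over the coordinates listed in vs,
   each over [0, L] (one period), the other coordinates fixed as in y, equals v. *)
Fixpoint iint (L : R) (vs : list nat) (F : (nat -> R) -> R) (y : nat -> R) (v : R)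
  : Prop :=
  match vs with
  | nil => F y = v
  | i :: vs' => exists g : R -> R,
      (forall t, iint L vs' F (upd y i t) (g t)) /\ is_RInt g 0 L v
  end.

Definition all_coords (N : nat) : list nat := iota 0 (muln 3 (Nbar N)).

Definition other_coords (N : nat) (j : nat) : list nat :=
  flatten [seq (if Nat.eqb l j then [::] else [:: (muln 3 l); (addn (muln 3 l) 1); (addn (muln 3 l) 2)])
          | l <- iota 0 (Nbar N)].

(* a point with x_j = x (other coordinates 0, to be integrated out) *)
Definition at_part (j : nat) (x : R * R * R) : nat -> R :=
  let '(x1, x2, x3) := x in
  fun n => if Nat.eqb n (muln 3 j) then x1
           else if Nat.eqb n (addn (muln 3 j) 1) then x2
           else if Nat.eqb n (addn (muln 3 j) 2) then x3 else 0.

Definition marginal_is (N M : nat) (C : 'I_M -> Cx) (K : 'I_M -> 'I_(Nbar N) -> Mom)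
  (j : nat) (x : R * R * R) (v : R) : Prop :=
  iint (INR N) (other_coords N j) (fun y => Cnorm2 (psi N M C K y)) (at_part j x) v.

Definition rho_e_is (N M : nat) (e : R) (C : 'I_M -> Cx)
  (K : 'I_M -> 'I_(Nbar N) -> Mom) (x : R * R * R) (r : R) : Prop :=
  exists v : nat -> R,
    (forall j, is_true (ltn j (Nbar N)) -> marginal_is N M C K j x (v j)) /\
    r = - e * \big[Rplus/0]_(j < Nbar N) v j.

Definition ndiff (N : nat) (ks ks' : 'I_(Nbar N) -> Mom) : nat :=
  #|[set j : 'I_(Nbar N) | ks j \notin [seq ks' i | i : 'I_(Nbar N)]]|.

(* Main.v *)
Require Import Defs.
From HB Require Import structures.
From mathcomp Require Import all_boot all_fingroup.
From mathcomp Require Import ssralg ssrint.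
From Stdlib Require Import Reals.
From Coquelicot Require Import Coquelicot.
From Stdlib Require Import FunctionalExtensionality Lra Lia Classical.
From mathcomp Require Import zify.
Import Defs.
Local Open Scope R_scope.
Lemma Rplus_assoc' : associative Rplus. Proof. by move=> *; rewrite Rplus_assoc. Qed.
HB.instance Definition _ := Monoid.isComLaw.Build R 0 Rplus Rplus_assoc' Rplus_comm Rplus_0_l.

Lemma big_Rmult_l (I : Type) (r : seq I) (P : pred I) (F : I -> R) c :
  c * \big[Rplus/0]_(i <- r | P i) F i = \big[Rplus/0]_(i <- r | P i) (c * F i).
Proof. elim/big_rec2: _ => [|i x y _ <-]; ring. Qed.

Lemma Defs_is_RInt_of (f : R -> R) a b v : RInt.is_RInt f a b v -> Defs.is_RInt f a b v.
Proof.
move=> H. have ex : ex_RInt f a b by exists v.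
exists (ex_RInt_Reals_0 _ _ _ ex). rewrite -RInt_Reals. exact: is_RInt_unique.
Qed.

Lemma Defs_is_RInt_uniq f a b v w : Defs.is_RInt f a b v -> Defs.is_RInt f a b w -> v = w.
Proof. move=> [p1 <-] [p2 <-]; by rewrite -!RInt_Reals. Qed.
Lemma iint_uniq L vs F y v w : iint L vs F y v -> iint L vs F y w -> v = w.
Proof.
elim: vs y v w => [|i vs IH] y v w /=; first by move=> <- <-.
move=> [g1 [H1 I1]] [g2 [H2 I2]].
have eg : g1 = g2 by apply: functional_extensionality => t; exact: IH (H1 t) (H2 t).
by subst; exact: Defs_is_RInt_uniq I1 I2.
Qed.

Definition Rzero (r : R) : bool := if Req_EM_T r 0 then true else false.
Lemma RzeroP r : reflect (r = 0) (Rzero r).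
Proof. rewrite /Rzero; case: Req_EM_T => h; constructor => //. Qed.

Lemma cos_per x n1 n2 : cos (x + 2 * PI * (INR n1 - INR n2)) = cos x.
Proof.
have -> : x + 2 * PI * (INR n1 - INR n2) = (x - 2 * INR n2 * PI) + 2 * INR n1 * PI by ring.
rewrite cos_period. rewrite -(cos_period (x - 2 * INR n2 * PI) n2). f_equal; ring.
Qed.
Lemma sin_per x n1 n2 : sin (x + 2 * PI * (INR n1 - INR n2)) = sin x.
Proof.
have -> : x + 2 * PI * (INR n1 - INR n2) = (x - 2 * INR n2 * PI) + 2 * INR n1 * PI by ring.
rewrite sin_period. rewrite -(sin_period (x - 2 * INR n2 * PI) n2). f_equal; ring.
Qed.

Lemma int_term N p q c d (HN : (0 < N)%nat)
  (Hper : exists n1 n2, c * INR N = 2 * PI * (INR n1 - INR n2)) :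
  RInt.is_RInt (fun t => p * cos (c * t + d) + q * sin (c * t + d)) 0 (INR N)
    (if Rzero c then INR N * (p * cos d + q * sin d) else 0).
Proof.
case: RzeroP => [->|hc].
  apply: (is_RInt_ext (fun _ => p * cos d + q * sin d)).
    by move=> t _; rewrite Rmult_0_l Rplus_0_l.
  have := is_RInt_const 0 (INR N) (p * cos d + q * sin d).
  by rewrite /scal /= /mult /= Rminus_0_r.
have [n1 [n2 Hn]] := Hper.
set G := fun t => (p * sin (c * t + d) - q * cos (c * t + d)) / c.
have HG : minus (G (INR N)) (G 0) = 0.
  rewrite /G /minus /plus /opp /=.
  have -> : c * INR N + d = d + 2 * PI * (INR n1 - INR n2) by rewrite Hn; ring.
  rewrite cos_per sin_per Rmult_0_r Rplus_0_l. ring.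
have H : RInt.is_RInt (fun t => p * cos (c * t + d) + q * sin (c * t + d)) 0 (INR N) (minus (G (INR N)) (G 0)).
  apply: (is_RInt_derive G) => t _.
  rewrite /G. auto_derive => //. field. exact: hc.
apply: ex_derive_continuous. auto_derive => //.
by rewrite HG in H.
Qed.

Lemma is_RInt_big (X : Type) (r : seq X) (P : pred X) (f : X -> R -> R) (v : X -> R) a b :
  (forall x, P x -> RInt.is_RInt (f x) a b (v x)) ->
  RInt.is_RInt (fun t => \big[Rplus/0]_(x <- r | P x) f x t) a b (\big[Rplus/0]_(x <- r | P x) v x).
Proof.
move=> H; elim: r => [|x r IH].
  apply: (is_RInt_ext (fun _ => 0)); first by move=> t _; rewrite big_nil.
  rewrite big_nil. have := is_RInt_const a b 0. by rewrite scal_zero_r.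
rewrite big_cons. case Px: (P x).
  apply: (is_RInt_ext (fun t => f x t + \big[Rplus/0]_(x <- r | P x) f x t)).
    by move=> t _; rewrite big_cons Px.
  exact: (is_RInt_plus _ _ _ _ _ _ (H x Px) IH).
apply: (is_RInt_ext (fun t => \big[Rplus/0]_(x <- r | P x) f x t)) => //.
by move=> t _; rewrite big_cons Px.
Qed.

Lemma upd_same y i : upd y i (y i) = y.
Proof. apply: functional_extensionality => n; rewrite /upd; by case: (Nat.eqb_spec n i) => [->|]. Qed.

Lemma iint_trig N (HN : (0 < N)%nat) (X : finType) (p q : X -> R)
  (ph : X -> (nat -> R) -> R) (cf : X -> nat -> R)
  (Hlin : forall x y i t, ph x (upd y i t) = cf x i * t + ph x (upd y i 0))
  (Hper : forall x i, exists n1 n2, cf x i * INR N = 2 * PI * (INR n1 - INR n2)) vs y :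
  iint (INR N) vs (fun z => \big[Rplus/0]_(x : X) (p x * cos (ph x z) + q x * sin (ph x z))) y
   (INR N ^ size vs * \big[Rplus/0]_(x : X | all (fun v => Rzero (cf x v)) vs)
        (p x * cos (ph x y) + q x * sin (ph x y))).
Proof.
elim: vs y => [|i vs IH] y /=.
  by rewrite Rmult_1_l; apply: eq_bigl.
exists (fun t => INR N ^ size vs * \big[Rplus/0]_(x : X | all (fun v => Rzero (cf x v)) vs)
        (p x * cos (ph x (upd y i t)) + q x * sin (ph x (upd y i t)))).
split; first by move=> t; exact: IH.
apply: Defs_is_RInt_of.
have H1 : RInt.is_RInt (fun t => \big[Rplus/0]_(x : X | all (fun v => Rzero (cf x v)) vs)
        (p x * cos (ph x (upd y i t)) + q x * sin (ph x (upd y i t)))) 0 (INR N)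
   (\big[Rplus/0]_(x : X | all (fun v => Rzero (cf x v)) vs)
       (if Rzero (cf x i) then INR N * (p x * cos (ph x y) + q x * sin (ph x y)) else 0)).
  apply: is_RInt_big => x _.
  apply: (is_RInt_ext (fun t => p x * cos (cf x i * t + ph x (upd y i 0)) + q x * sin (cf x i * t + ph x (upd y i 0)))).
    by move=> t _; rewrite [ph x (upd y i t)]Hlin.
  have := int_term N (p x) (q x) (cf x i) (ph x (upd y i 0)) HN (Hper x i).
  case: (RzeroP (cf x i)) => // h0.
  have -> : ph x y = ph x (upd y i 0).
    by rewrite -{1}(upd_same y i) Hlin h0 Rmult_0_l Rplus_0_l.
  done.
have H2 := is_RInt_scal _ _ _ (INR N ^ size vs) _ H1.
move: H2; rewrite /scal /= /mult /=.
have -> : INR N ^ size vs * \big[Rplus/0]_(x : X | all (fun v => Rzero (cf x v)) vs)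
       (if Rzero (cf x i) then INR N * (p x * cos (ph x y) + q x * sin (ph x y)) else 0)
  = INR N * INR N ^ size vs * \big[Rplus/0]_(x : X | Rzero (cf x i) && all (fun v => Rzero (cf x v)) vs)
        (p x * cos (ph x y) + q x * sin (ph x y)); last by [].
rewrite -big_mkcondr /=.
rewrite -big_Rmult_l.
rewrite (eq_bigl (fun x => Rzero (cf x i) && all (fun v => Rzero (cf x v)) vs)); last by move=> x; rewrite andbC.
ring.
Qed.

Definition Ka N M (K : 'I_M -> 'I_(Nbar N) -> Mom) (a : ('I_M * 'S_(Nbar N))%type) (l : 'I_(Nbar N)) : Mom :=
  K a.1 ((a.2)^-1%g l).
Definition th N M K (a : ('I_M * 'S_(Nbar N))%type) (y : nat -> R) : R :=
  \big[Rplus/0]_(l < Nbar N) kdot N (Ka N M K a l) (Defs.pos y l).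
Definition c0 N := / sqrt (INR (factorial (Nbar N))).
Definition Ra N M (C : 'I_M -> Cx) (a : ('I_M * 'S_(Nbar N))%type) := re (C a.1) * c0 N * sgnR (Nbar N) a.2.
Definition Ia N M (C : 'I_M -> Cx) (a : ('I_M * 'S_(Nbar N))%type) := im (C a.1) * c0 N * sgnR (Nbar N) a.2.

Lemma re_big (I : Type) (r : seq I) (P : pred I) (F : I -> Cx) :
  re (\big[Cadd/C0]_(i <- r | P i) F i) = \big[Rplus/0]_(i <- r | P i) re (F i).
Proof. by elim/big_rec2: _ => [|i x y _ <-]. Qed.
Lemma im_big (I : Type) (r : seq I) (P : pred I) (F : I -> Cx) :
  im (\big[Cadd/C0]_(i <- r | P i) F i) = \big[Rplus/0]_(i <- r | P i) im (F i).
Proof. by elim/big_rec2: _ => [|i x y _ <-]. Qed.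
Lemma Cexpi_big (I : Type) (r : seq I) (P : pred I) (F : I -> R) :
  \big[Cmul/C1]_(i <- r | P i) Cexpi (F i) = Cexpi (\big[Rplus/0]_(i <- r | P i) F i).
Proof.
symmetry; apply: (big_morph Cexpi).
  move=> x y; rewrite /Cexpi /Cmul /= cos_plus sin_plus. f_equal; ring.
by rewrite /Cexpi cos_0 sin_0.
Qed.

Lemma sum_sub (I : Type) (r : seq I) (P : pred I) (F G : I -> R) :
  \big[Rplus/0]_(i <- r | P i) (F i - G i) =
  \big[Rplus/0]_(i <- r | P i) F i - \big[Rplus/0]_(i <- r | P i) G i.
Proof. elim/big_rec3: _ => [|i x y z _ ->]; ring. Qed.

Lemma th_eq N M K t (s : 'S_(Nbar N)) y :
  \big[Rplus/0]_(j < Nbar N) kdot N (K t j) (Defs.pos y (s j)) = th N M K (t, s) y.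
Proof.
rewrite /th [in RHS](reindex_inj (@perm_inj _ s)) /=. apply: eq_bigr => j _.
by rewrite /Ka /= permK.
Qed.

Lemma wedge_re N M K t y :
  re (wedge N (K t) y) = c0 N * \big[Rplus/0]_(s : 'S_(Nbar N)) (sgnR (Nbar N) s * cos (th N M K (t, s) y)).
Proof.
rewrite /wedge /= re_big. f_equal. apply: eq_bigr => s _.
by rewrite /= Cexpi_big th_eq.
Qed.
Lemma wedge_im N M K t y :
  im (wedge N (K t) y) = c0 N * \big[Rplus/0]_(s : 'S_(Nbar N)) (sgnR (Nbar N) s * sin (th N M K (t, s) y)).
Proof.
rewrite /wedge /= im_big. f_equal. apply: eq_bigr => s _.
by rewrite /= Cexpi_big th_eq.
Qed.

Lemma re_psi N M C K y :
  re (psi N M C K y) = \big[Rplus/0]_(a : ('I_M * 'S_(Nbar N))%type)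
     (Ra N M C a * cos (th N M K a y) - Ia N M C a * sin (th N M K a y)).
Proof.
rewrite /psi re_big -(pair_big xpredT xpredT (fun t s => Ra N M C (t, s) * cos (th N M K (t, s) y)
   - Ia N M C (t, s) * sin (th N M K (t, s) y))) /=.
apply: eq_bigr => t _.
change (re (C t) * re (wedge N (K t) y) - im (C t) * im (wedge N (K t) y) = \big[Rplus/0]_(s : 'S_(Nbar N)) (Ra N M C (t, s) * cos (th N M K (t, s) y) - Ia N M C (t, s) * sin (th N M K (t, s) y))).
rewrite (wedge_re N M) (wedge_im N M).
rewrite !big_Rmult_l -sum_sub. apply: eq_bigr => s _. rewrite /Ra /Ia /=. ring.
Qed.

Lemma im_psi N M C K y :
  im (psi N M C K y) = \big[Rplus/0]_(a : ('I_M * 'S_(Nbar N))%type)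
     (Ra N M C a * sin (th N M K a y) + Ia N M C a * cos (th N M K a y)).
Proof.
rewrite /psi im_big -(pair_big xpredT xpredT (fun t s => Ra N M C (t, s) * sin (th N M K (t, s) y)
   + Ia N M C (t, s) * cos (th N M K (t, s) y))) /=.
apply: eq_bigr => t _.
change (re (C t) * im (wedge N (K t) y) + im (C t) * re (wedge N (K t) y) = \big[Rplus/0]_(s : 'S_(Nbar N)) (Ra N M C (t, s) * sin (th N M K (t, s) y) + Ia N M C (t, s) * cos (th N M K (t, s) y))).
rewrite (wedge_re N M) (wedge_im N M).
rewrite !big_Rmult_l -big_split. apply: eq_bigr => s _. rewrite /Ra /Ia /=. ring.
Qed.

Lemma sq_sum (X : finType) (u w : X -> R) :
  (\big[Rplus/0]_(a : X) u a) * (\big[Rplus/0]_(b : X) w b) =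
  \big[Rplus/0]_(x : (X * X)%type) (u x.1 * w x.2).
Proof.
rewrite -(pair_big xpredT xpredT (fun a b => u a * w b)) /=.
rewrite Rmult_comm big_Rmult_l. apply: eq_bigr => a _.
by rewrite Rmult_comm big_Rmult_l.
Qed.

Definition pp N M C (x : (('I_M * 'S_(Nbar N)) * ('I_M * 'S_(Nbar N)))%type) :=
  Ra N M C x.1 * Ra N M C x.2 + Ia N M C x.1 * Ia N M C x.2.
Definition qq N M C (x : (('I_M * 'S_(Nbar N)) * ('I_M * 'S_(Nbar N)))%type) :=
  Ra N M C x.1 * Ia N M C x.2 - Ia N M C x.1 * Ra N M C x.2.
Definition ph N M K (x : (('I_M * 'S_(Nbar N)) * ('I_M * 'S_(Nbar N)))%type) (y : nat -> R) :=
  th N M K x.1 y - th N M K x.2 y.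

Lemma norm_psi N M C K y :
  Cnorm2 (psi N M C K y) = \big[Rplus/0]_(x : (('I_M * 'S_(Nbar N)) * ('I_M * 'S_(Nbar N)))%type)
    (pp N M C x * cos (ph N M K x y) + qq N M C x * sin (ph N M K x y)).
Proof.
rewrite /Cnorm2 re_psi im_psi !sq_sum -big_split /=. apply: eq_bigr => x _.
rewrite /pp /qq /ph cos_minus sin_minus.
move: (Ra N M C x.1) (Ra N M C x.2) (Ia N M C x.1) (Ia N M C x.2) (cos (th N M K x.1 y)) (cos (th N M K x.2 y)) (sin (th N M K x.1 y)) (sin (th N M K x.2 y)) => a b c d e f g h. ring.
Qed.

Definition ind (b : bool) : R := if b then 1 else 0.
Definition kcoef N (m : Mom) (l i : nat) : R :=
  let '(m1, m2, m3) := m in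
  (2 * PI / INR N) * (intR m1 * ind (Nat.eqb (muln 3 l) i) + intR m2 * ind (Nat.eqb (addn (muln 3 l) 1) i)
     + intR m3 * ind (Nat.eqb (addn (muln 3 l) 2) i)).

Lemma kdot_upd N m y (l i : nat) t :
  kdot N m (pos (upd y i t) l) = kcoef N m l i * t + kdot N m (pos (upd y i 0) l).
Proof.
case: m => [[m1 m2] m3]. rewrite /kdot /pos /upd /kcoef /ind.
case: (Nat.eqb (muln 3 l) i); case: (Nat.eqb (addn (muln 3 l) 1) i);
  case: (Nat.eqb (addn (muln 3 l) 2) i); ring.
Qed.

Definition cft N M K (a : ('I_M * 'S_(Nbar N))%type) (i : nat) : R :=
  \big[Rplus/0]_(l < Nbar N) kcoef N (Ka N M K a l) l i.

Lemma th_lin N M K a y i t :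
  th N M K a (upd y i t) = cft N M K a i * t + th N M K a (upd y i 0).
Proof.
rewrite /th /cft. under eq_bigr do rewrite kdot_upd.
rewrite big_split /=. f_equal. rewrite Rmult_comm big_Rmult_l.
apply: eq_bigr => l _; ring.
Qed.

Definition comp (r : nat) (m : Mom) : int :=
  let '(m1, m2, m3) := m in match r with 0 => m1 | 1 => m2 | _ => m3 end.

Lemma eqb_eqn (a b : nat) : Nat.eqb a b = (a == b).
Proof. by case: (Nat.eqb_spec a b) => [->|h]; [rewrite eqxx | apply/esym/eqP]. Qed.

Lemma cft_val N M K a (l : 'I_(Nbar N)) r : (r < 3)%nat ->
  cft N M K a (addn (muln 3 l) r) = (2 * PI / INR N) * intR (comp r (Ka N M K a l)).
Proof.
move=> hr. rewrite /cft (bigD1 l) //= big1 => [|l' hl].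
  rewrite Rplus_0_r /kcoef. case: (Ka N M K a l) => [[m1 m2] m3].
  rewrite /ind !eqb_eqn.
  case: r hr => [|[|[|r]]] // _ /=.
  - have -> : (3 * l == 3 * l + 0)%nat by apply/eqP; lia.
    have -> : (3 * l + 1 == 3 * l + 0)%nat = false by apply/eqP; lia.
    have -> : (3 * l + 2 == 3 * l + 0)%nat = false by apply/eqP; lia.
    ring.
  - have -> : (3 * l == 3 * l + 1)%nat = false by apply/eqP; lia.
    have -> : (3 * l + 1 == 3 * l + 1)%nat by apply/eqP; lia.
    have -> : (3 * l + 2 == 3 * l + 1)%nat = false by apply/eqP; lia.
    ring.
  - have -> : (3 * l == 3 * l + 2)%nat = false by apply/eqP; lia.
    have -> : (3 * l + 1 == 3 * l + 2)%nat = false by apply/eqP; lia.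
    have -> : (3 * l + 2 == 3 * l + 2)%nat by apply/eqP; lia.
    ring.
have hne : (l' : nat) <> l by move=> h; move/eqP: hl; apply; apply: val_inj.
rewrite /kcoef. case: (Ka N M K a l') => [[m1 m2] m3].
rewrite /ind !eqb_eqn.
have -> : (3 * l' == 3 * l + r)%nat = false by apply/eqP; lia.
have -> : (3 * l' + 1 == 3 * l + r)%nat = false by apply/eqP; lia.
have -> : (3 * l' + 2 == 3 * l + r)%nat = false by apply/eqP; lia.
ring.
Qed.

Lemma cft_big N M K a i : (3 * Nbar N <= i)%nat -> cft N M K a i = 0.
Proof.
move=> hi. rewrite /cft big1 // => l _.
rewrite /kcoef. case: (Ka N M K a l) => [[m1 m2] m3].
have hl := ltn_ord l.
rewrite /ind !eqb_eqn.
have -> : (3 * l == i)%nat = false by apply/eqP; lia.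
have -> : (3 * l + 1 == i)%nat = false by apply/eqP; lia.
have -> : (3 * l + 2 == i)%nat = false by apply/eqP; lia.
ring.
Qed.

Lemma intR_nat (m : int) : exists n1 n2, intR m = INR n1 - INR n2.
Proof. case: m => n; [exists n, 0%nat | exists 0%nat, n.+1] => /=; ring. Qed.

Lemma cft_per N M K a i : (0 < N)%nat ->
  exists n1 n2, cft N M K a i * INR N = 2 * PI * (INR n1 - INR n2).
Proof.
move=> HN. have hN : INR N <> 0 by apply: not_0_INR; lia.
case: (leqP (3 * Nbar N) i) => hi.
  exists 0%nat, 0%nat. rewrite cft_big //. ring.
have hl : (i %/ 3 < Nbar N)%nat by rewrite ltn_divLR //; lia.
have -> : i = addn (muln 3 (Ordinal hl)) (i %% 3) by rewrite /= {1}(divn_eq i 3); lia.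
rewrite cft_val; last by rewrite ltn_mod.
have [n1 [n2 ->]] := intR_nat (comp (i %% 3) (Ka N M K a (Ordinal hl))).
exists n1, n2. field. exact: hN.
Qed.

Lemma intR_inj : injective intR.
Proof.
case=> n; case=> n' => h; rewrite /intR in h.
- by rewrite (INR_eq _ _ h).
- have := pos_INR n; have := lt_0_INR n'.+1 (Nat.lt_0_succ _); lra.
- have := pos_INR n'; have := lt_0_INR n.+1 (Nat.lt_0_succ _); lra.
- have h' : INR n.+1 = INR n'.+1 by lra.
  by have [->] := INR_eq _ _ h'.
Qed.

Lemma tpn_neq0 N : (0 < N)%nat -> 2 * PI / INR N <> 0.
Proof.
move=> HN. have := PI_RGT_0. have : 0 < INR N by apply: lt_0_INR; lia.
move=> h1 h2. apply: Rgt_not_eq. apply: Rdiv_lt_0_compat; lra.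
Qed.

Definition cfx N M K (x : (('I_M * 'S_(Nbar N)) * ('I_M * 'S_(Nbar N)))%type) (i : nat) :=
  cft N M K x.1 i - cft N M K x.2 i.

Lemma comp_eq (m m' : Mom) : (forall r, (r < 3)%nat -> comp r m = comp r m') -> m = m'.
Proof.
case: m => [[a b] c]; case: m' => [[a' b'] c'] h.
by have := h 0%nat erefl; have := h 1%nat erefl; have := h 2%nat erefl => /= -> -> ->.
Qed.

Lemma other_filter N M K x (j : nat) : (0 < N)%nat ->
  all (fun v => Rzero (cfx N M K x v)) (other_coords N j) ->
  forall l : 'I_(Nbar N), (l : nat) != j -> Ka N M K x.1 l = Ka N M K x.2 l.
Proof.
move=> HN /allP H l hl. apply: comp_eq => r hr.
have : Rzero (cfx N M K x (addn (muln 3 l) r)).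
  apply: H. apply/flatten_mapP. exists (val l).
    by rewrite mem_iota /= add0n ltn_ord.
  rewrite eqb_eqn (negbTE hl) !inE.
  by case: r hr => [|[|[|r]]] //= _; rewrite ?addn0 eqxx ?orbT.
move/RzeroP. rewrite /cfx !cft_val // => h.
apply: intR_inj. have := tpn_neq0 N HN => hn.
apply: (Rmult_eq_reg_l (2 * PI / INR N)) => //. lra.
Qed.

Lemma all_to_other N M K x (j : nat) :
  all (fun v => Rzero (cfx N M K x v)) (all_coords N) ->
  all (fun v => Rzero (cfx N M K x v)) (other_coords N j).
Proof.
move=> /allP H. apply/allP => v hv. apply: H.
move/flatten_mapP: hv => [l]; rewrite mem_iota add0n => /andP [_ hl].
rewrite /all_coords mem_iota add0n /=.
case: (Nat.eqb l j) => //. rewrite !inE => /orP [/eqP ->|/orP [/eqP ->| /eqP ->]]; lia.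
Qed.

Lemma key N M (C : 'I_M -> Cx) (K : 'I_M -> 'I_(Nbar N) -> Mom)
  (Hdistinct : forall t, injective (K t))
  (Hadr : forall t t', t <> t' -> C t <> C0 -> C t' <> C0 ->
      is_true (leq 2%nat (ndiff N (K t) (K t'))))
  (a b : ('I_M * 'S_(Nbar N))%type) (j : 'I_(Nbar N)) :
  (forall l : 'I_(Nbar N), l != j -> Ka N M K a l = Ka N M K b l) ->
  C a.1 <> C0 -> C b.1 <> C0 -> a = b.
Proof.
case: a => t s; case: b => t' s' /= H Ct Ct'.
rewrite /Ka /= in H.
have et : t = t'.
  case: (eqVneq t t') => // ne. exfalso.
  have ne' : t <> t' by apply/eqP.
  have := Hadr _ _ ne' Ct Ct'. rewrite /ndiff.
  have sub : [set i | K t i \notin [seq K t' i0 | i0 : 'I_(Nbar N)]] \subset [set (s^-1)%g j].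
    apply/subsetP => i; rewrite !inE => hi; case: (eqVneq i ((s^-1)%g j)) => // hne; exfalso; move/negP: hi; apply.
    have hl : s i != j.
      apply/eqP => e. have e' : i = (s^-1)%g j by rewrite -e permK.
      by rewrite e' eqxx in hne.
    have := H (s i) hl. rewrite permK => ->. by rewrite map_f ?mem_enum.
  have := subset_leq_card sub. rewrite cards1. by move=> h1 /leq_trans /(_ h1).
subst t'.
have Hs : forall l, l != j -> (s^-1)%g l = (s'^-1)%g l.
  by move=> l hl; apply: (Hdistinct t); apply: H.
have ei : (s^-1)%g = (s'^-1)%g.
  apply/permP => l. case: (eqVneq l j) => [->|]; last exact: Hs.
  case: (eqVneq ((s^-1)%g j) ((s'^-1)%g j)) => // hne. exfalso.
  set v := (s'^-1)%g j.
  have hm : s v != j.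
    apply/eqP=> e. have e' : (s^-1)%g j = v by rewrite -e permK.
    by rewrite e' eqxx in hne.
  have := Hs (s v) hm. rewrite permK => e2.
  have e3 : s v = j by apply: (@perm_inj _ (s'^-1)%g); rewrite -e2.
  by rewrite e3 eqxx in hm.
have es : s = s' by apply: invg_inj.
by rewrite es.
Qed.

Definition TT N M C K (x : (('I_M * 'S_(Nbar N)) * ('I_M * 'S_(Nbar N)))%type) y :=
  pp N M C x * cos (ph N M K x y) + qq N M C x * sin (ph N M K x y).

Lemma collapse (X : finType) (P : pred (X * X)) (F : (X * X)%type -> R) :
  (forall x, P x -> x.1 <> x.2 -> F x = 0) -> (forall a, P (a, a)) ->
  \big[Rplus/0]_(x | P x) F x = \big[Rplus/0]_(a : X) F (a, a).
Proof.
move=> H Hd.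
rewrite (bigID (fun x => x.1 == x.2)) /= [X in _ + X]big1 => [|x /andP [Px ne]]; last first.
  by apply: H => //; apply/eqP.
rewrite Rplus_0_r.
transitivity (\big[Rplus/0]_(a : X) \big[Rplus/0]_(b | P (a, b) && (a == b)) F (a, b)).
  rewrite (pair_big_dep xpredT (fun a b => P (a, b) && (a == b)) (fun a b => F (a, b))).
  by apply: eq_big => [[a b]|[a b] _].
apply: eq_bigr => a _. rewrite (eq_bigl (fun b => b == a)) ?big_pred1_eq // => b.
by case: (eqVneq a b) => [->|ne]; rewrite ?Hd ?andbF ?andbT ?eqxx // eq_sym (negbTE ne).
Qed.

Lemma sum_filter N M C K
  (Hdistinct : forall t, injective (K t))
  (Hadr : forall t t', t <> t' -> C t <> C0 -> C t' <> C0 ->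
      is_true (leq 2%nat (ndiff N (K t) (K t'))))
  (HN : (0 < N)%nat) (P : pred (('I_M * 'S_(Nbar N)) * ('I_M * 'S_(Nbar N)))) y (j : 'I_(Nbar N))
  (HP : forall x, P x -> all (fun v => Rzero (cfx N M K x v)) (other_coords N j))
  (Hd : forall a, P (a, a)) :
  \big[Rplus/0]_(x | P x) TT N M C K x y =
  \big[Rplus/0]_(a : ('I_M * 'S_(Nbar N))%type) (Ra N M C a * Ra N M C a + Ia N M C a * Ia N M C a).
Proof.
rewrite (collapse _ P (fun x => TT N M C K x y)) => [|x Px ne|//].
  apply: eq_bigr => a _. rewrite /TT /ph /pp /qq /= Rminus_diag cos_0 sin_0. ring.
have [C1z|C1nz] := (@classic (C x.1.1 = C0)).
  rewrite /TT /pp /qq /Ra /Ia C1z /=. ring.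
have [C2z|C2nz] := (@classic (C x.2.1 = C0)).
  rewrite /TT /pp /qq /Ra /Ia C2z /=. ring.
exfalso; apply: ne. apply: (key N M C K Hdistinct Hadr _ _ j) => // l hl.
exact: (other_filter N M K x j HN (HP x Px) l hl).
Qed.

Lemma size_other_gen (j : nat) s :
  size (flatten [seq (if Nat.eqb l j then [::] else [:: (muln 3 l); (addn (muln 3 l) 1); (addn (muln 3 l) 2)]) | l <- s])
  = (3 * count (fun l => l != j) s)%nat.
Proof.
elim: s => [|l s IH] //=. rewrite size_cat IH eqb_eqn.
by case: (l == j) => /=; lia.
Qed.

Lemma size_other N (j : nat) : (j < Nbar N)%nat -> size (other_coords N j) = (3 * (Nbar N - 1))%nat.
Proof.
move=> hj. rewrite /other_coords size_other_gen.
have h1 := count_predC (pred1 j) (seq.iota 0%nat (Nbar N)).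
have h2 : count (pred1 j) (seq.iota 0 (Nbar N)) = 1%nat.
  by rewrite (count_uniq_mem j (iota_uniq _ _)) mem_iota add0n hj.
rewrite size_iota in h1.
have -> : count (fun l => l != j) (seq.iota 0 (Nbar N)) = count (predC (pred1 j)) (seq.iota 0 (Nbar N)).
  by apply: eq_count.
rewrite h2 in h1. lia.
Qed.

Lemma INR_nb N : INR (Nbar N) = INR N ^ 3.
Proof.
have -> : Nbar N = (N * (N * N))%coq_nat by rewrite /Nbar !expnS expn0 muln1.
rewrite !mult_INR /=. ring.
Qed.

Lemma iter_Rplus n c : iter n (Rplus c) 0 = INR n * c.
Proof. elim: n => [|n IH]; first by rewrite /= Rmult_0_l. rewrite iterS IH S_INR. ring. Qed.

Theorem lemma4p1 (N : nat) (HN : is_true (ltn 0%nat N)) (e Z : R) (He : 0 < e) (HZ : 0 < Z)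
  (omega0 : R) (Homega0 : is_min_energy N omega0)
  (M : nat) (C : 'I_M -> Cx) (K : 'I_M -> 'I_(Nbar N) -> Mom)
  (* each kbar is a set of Nbar distinct momenta in Xi *)
  (Hdistinct : forall t, injective (K t))
  (* the expansion runs over pairwise different sets kbar *)
  (Hsets : forall t t', t <> t' ->
      ~ exists s : 'S_(Nbar N), forall j, K t' j = K t (s j))
  (* each kbar has energy (1/2) sum_j k_j^2 = omega0 *)
  (Henergy : forall t, energy N (K t) = omega0)
  (* condition (adr) *)
  (Hadr : forall t t', t <> t' -> C t <> C0 -> C t' <> C0 ->
      is_true (leq 2%nat (ndiff N (K t) (K t'))))
  (* normalization: int_{Tbar} |psi0|^2 = Z *)
  (Hnorm : iint (INR N) (all_coords N) (fun y => Cnorm2 (psi N M C K y)) (fun _ => 0) Z) :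
  (forall x : R * R * R, rho_e_is N M e C K x (- e * Z)) /\
  (forall x : R * R * R, marginal_is N M C K 0%nat x (Z / INR (Nbar N))).
Proof.
have Hnb : (0 < Nbar N)%nat by rewrite /Nbar expn_gt0; apply/orP; left.
have HNR : INR N <> 0 by apply: not_0_INR => h; rewrite h in HN.
have Hf : (fun y => Cnorm2 (psi N M C K y)) =
   (fun z => \big[Rplus/0]_(x : (('I_M * 'S_(Nbar N)) * ('I_M * 'S_(Nbar N)))%type)
    (pp N M C x * cos (ph N M K x z) + qq N M C x * sin (ph N M K x z))).
  by apply: functional_extensionality => y; rewrite norm_psi.
have Hlin : forall x y i t, ph N M K x (upd y i t) = cfx N M K x i * t + ph N M K x (upd y i 0).
  by move=> x y i t; rewrite /ph /cfx (th_lin N M K x.1 y i t) (th_lin N M K x.2 y i t); ring.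
have Hper : forall x i, exists n1 n2, cfx N M K x i * INR N = 2 * PI * (INR n1 - INR n2).
  move=> x i.
  have [a1 [a2 ha]] := cft_per N M K x.1 i HN.
  have [b1 [b2 hb]] := cft_per N M K x.2 i HN.
  exists (Nat.add a1 b2), (Nat.add a2 b1). rewrite !plus_INR /cfx.
  rewrite Rmult_minus_distr_r ha hb. ring.
set D := \big[Rplus/0]_(a : ('I_M * 'S_(Nbar N))%type) (Ra N M C a * Ra N M C a + Ia N M C a * Ia N M C a).
have Hdiag : forall a vs, all (fun v => Rzero (cfx N M K (a, a) v)) vs.
  move=> a vs; apply/allP => v _; apply/RzeroP; rewrite /cfx /=; ring.
pose j0 := Ordinal Hnb.
have HZD : Z = INR N ^ (3 * Nbar N) * D.
  rewrite Hf in Hnorm.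
  have := iint_trig N HN _ (pp N M C) (qq N M C) (ph N M K) (cfx N M K) Hlin Hper (all_coords N) (fun _ => 0).
  rewrite /all_coords size_iota => H.
  rewrite (iint_uniq _ _ _ _ _ _ Hnorm H). f_equal.
  apply: (sum_filter N M C K Hdistinct Hadr HN _ _ j0) => [x Px|a]; last exact: Hdiag.
  exact: all_to_other.
have Hmarg : forall (j : nat) x, (j < Nbar N)%nat -> marginal_is N M C K j x (Z / INR (Nbar N)).
  move=> j x hj. rewrite /marginal_is Hf.
  have := iint_trig N HN _ (pp N M C) (qq N M C) (ph N M K) (cfx N M K) Hlin Hper (other_coords N j) (at_part j x).
  have -> : Z / INR (Nbar N) = INR N ^ size (other_coords N j) *
     \big[Rplus/0]_(x0 | all (fun v : nat => Rzero (cfx N M K x0 v)) (other_coords N j))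
        (pp N M C x0 * cos (ph N M K x0 (at_part j x)) + qq N M C x0 * sin (ph N M K x0 (at_part j x))); last by [].
  rewrite (sum_filter N M C K Hdistinct Hadr HN _ _ (Ordinal hj)) => [|x0 //|a]; last exact: Hdiag.
  rewrite -/D size_other // HZD INR_nb.
  have -> : (3 * Nbar N)%nat = (3 * (Nbar N - 1) + 3)%nat by lia.
  rewrite pow_add. field. exact: HNR.
split.
  move=> x. exists (fun _ => Z / INR (Nbar N)). split.
    by move=> j hj; apply: Hmarg.
  rewrite big_const_ord iter_Rplus. field. apply: not_0_INR; lia.
by move=> x; apply: Hmarg.
Qed.
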